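(* Write the $n$-th $*$-cocharacter of $M_{1,2}(F)$ as $\chi_n^*(M_{1,2}(F))=\sum m_{\langle\lambda\rangle}\chi_{\langle\lambda\rangle}$, the sum over multipartitions $\langle\lambda\rangle=(\lambda(1),\lambda(2),\lambda(3),\lambda(4))\vdash n$ with $h(\lambda(1))\le2$, $h(\lambda(2))\le3$, $h(\lambda(3))\le2$, $h(\lambda(4))\le2$. If $\langle\lambda\rangle=(\lambda(1),\lambda(2),\emptyset,\emptyset)$, then $m_{\langle\lambda\rangle}\neq0$ if and only if $h(\lambda(1))\le1$.
   Context: $F$ is a field of characteristic zero. $M_{1,2}(F)$ is $M_3(F)$ with $\mathbb{Z}_2$-grading with even part spanned by $e_{11},e_{22},e_{23},e_{32},e_{33}$, odd part by $e_{12},e_{13},e_{21},e_{31}$, and orthosymplectic superinvolution $*$ sending the matrix with rows $(a,b,c),(d,e,f),(g,h,i)$ to the matrix with rows $(a,-g,d),(c,i,-f),(-b,-h,e)$. Its even symmetric, even skew, odd symmetric, odd skew parts are $\mathrm{span}\{e_{11},e_{22}+e_{33}\}$, $\mathrm{span}\{e_{22}-e_{33},e_{23},e_{32}\}$, $\mathrm{span}\{e_{12}-e_{31},e_{13}+e_{21}\}$, $\mathrm{span}\{e_{12}+e_{31},e_{13}-e_{21}\}$. In the free $*$-superalgebra on variables $y_i^+,y_i^-,z_i^+,z_i^-$ (even symmetric, even skew, odd symmetric, odd skew), a $*$-identity is a polynomial vanishing under all substitutions of the variables by elements of the corresponding parts; $Id_2^*$ denotes the set of them. $P_n^*$ is the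 span of the monomials $w_{\sigma(1)}\cdots w_{\sigma(n)}$, $\sigma\in S_n$, $w_i\in\{y_i^+,y_i^-,z_i^+,z_i^-\}$. The group $\mathbb{H}_n=(\mathbb{Z}_2\times\mathbb{Z}_2)\wr S_n$, with $\mathbb{Z}_2\times\mathbb{Z}_2=\{1,*,\zeta,*\zeta\}$, acts on $P_n^*$: $h=(a_1,\dots,a_n;\sigma)$ sends $y_i^+\mapsto y_{\sigma(i)}^+$, $y_i^-\mapsto \pm y_{\sigma(i)}^-$ (sign $+$ iff $a_{\sigma(i)}\in\{1,\zeta\}$), $z_i^+\mapsto\pm z_{\sigma(i)}^+$ ($+$ iff $a_{\sigma(i)}\in\{1,*\}$), $z_i^-\mapsto\pm z_{\sigma(i)}^-$ ($+$ iff $a_{\sigma(i)}\in\{1,*\zeta\}$). The character of the $\mathbb{H}_n$-module $P_n^*/(P_n^*\cap Id_2^*(M_{1,2}(F)))$ is the $n$-th $*$-cocharacter $\chi_n^*(M_{1,2}(F))$. Irreducible $\mathbb{H}_n$-characters $\chi_{\langle\lambda\rangle}$ correspond to multipartitions $\langle\lambda\rangle=(\lambda(1),\dots,\lambda(4))$, $\lambda(i)\vdash n_i$, $n_1+\dots+n_4=n$, where $\lambda(1),\lambda(2),\lambda(3),\lambda(4)$ correspond respectively to the variables of type $y^+,y^-,z^+,z^-$; equivalently $m_{\langle\lambda\rangle}$ is the multiplicity of $\chi_{\lambda(1)}\otimes\cdots\otimes\chi_{\lambda(4)}$ in the $S_{n_1}\times\cdots\times S_{n_4}$-character of the multilinear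 polynomials with $n_1,\dots,n_4$ variables of the four types modulo identities. $h(\mu)$ is the number of parts (height) of a partition $\mu$, and $\emptyset$ the empty partition; only multipartitions with the stated height bounds can occur with nonzero multiplicity. *)

(* Defs.v *)
From HB Require Import structures.
From mathcomp Require Import all_boot all_order all_algebra all_fingroup.
From mathcomp Require Import boolp.

Set Implicit Arguments.
Unset Strict Implicit.
Unset Printing Implicit Defensive.
Import GRing.Theory.
Local Open Scope ring_scope.

(* The height h(mu) of a partition mu is [size mu].                    *)
Definition is_partition (k : nat) (l : seq nat) : bool :=
  [&& sorted geq l, all (fun x => 0 < x)%N l & sumn l == k].

(* Row and column (0-based) of the cell containing the entry x of the
   canonical Young tableau of shape l, filled row by row with 0,1,2,...  *)
Fixpoint row_of (l : seq nat) (x : nat) : nat :=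
  if l is a :: l' then (if (x < a)%N then 0%N else (row_of l' (x - a)).+1)
  else 0%N.
Fixpoint col_of (l : seq nat) (x : nat) : nat :=
  if l is a :: l' then (if (x < a)%N then x else col_of l' (x - a))
  else x.

Section M12.
Variable F : fieldType.

Definition o0 : 'I_3 := @Ordinal 3 0 isT.
Definition o1 : 'I_3 := @Ordinal 3 1 isT.
Definition o2 : 'I_3 := @Ordinal 3 2 isT.

(* The orthosymplectic superinvolution on M_{1,2}(F):
   rows (a,b,c),(d,e,f),(g,h,i)  |->  rows (a,-g,d),(c,i,-f),(-b,-h,e). *)
Definition star_entry (A : 'M[F]_3) (i j : nat) : F :=
  match i, j with
  | 0, 0 => A o0 o0 | 0, 1 => - A o2 o0 | 0, _ => A o1 o0
  | 1, 0 => A o0 o2 | 1, 1 => A o2 o2   | 1, _ => - A o1 o2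
  | _, 0 => - A o0 o1 | _, 1 => - A o2 o1 | _, _ => A o1 o1
  end.
Definition star3 (A : 'M[F]_3) : 'M[F]_3 :=
  \matrix_(i < 3, j < 3) star_entry A i j.

(* Even part of the Z_2-grading: spanned by e11, e22, e23, e32, e33. *)
Definition even3 (A : 'M[F]_3) : Prop :=
  [/\ A o0 o1 = 0, A o0 o2 = 0, A o1 o0 = 0 & A o2 o0 = 0].
Definition sym_even (A : 'M[F]_3) : Prop := even3 A /\ star3 A = A.
Definition skew_even (A : 'M[F]_3) : Prop := even3 A /\ star3 A = - A.

(* Multilinear *-polynomials in n1 variables y^+_0..y^+_(n1-1) (even
   symmetric) and n2 variables y^-_(n1)..y^-_(n1+n2-1) (even skew):
   the variable with index i < n1 + n2 is of type y^+ iff i < n1.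
   A polynomial is given by its coefficients: f sigma is the coefficient
   of the monomial w_(sigma 0) w_(sigma 1) ... w_(sigma (n-1)). *)
Definition mpol (n : nat) := {ffun 'S_n -> F}.

Definition eval_mpol n (f : mpol n) (s : 'I_n -> 'M[F]_3) : 'M[F]_3 :=
  \sum_(sigma : 'S_n) f sigma *: \prod_(k < n) s (sigma k).

Definition admissible (n1 n2 : nat) (s : 'I_(n1 + n2) -> 'M[F]_3) : Prop :=
  forall i : 'I_(n1 + n2),
    ((i < n1)%N -> sym_even (s i)) /\ ((n1 <= i)%N -> skew_even (s i)).

Definition is_star_identity n1 n2 (f : mpol (n1 + n2)) : Prop :=
  forall s, admissible s -> eval_mpol f s = 0.

(* Cell labels of the tableau pair (T_{l1}, T_{l2}): variables of type y^+
   are placed in T_{l1}, variables of type y^- (shifted by n1) in T_{l2}. *)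
Definition trow n1 n2 (l1 l2 : seq nat) (i : 'I_(n1 + n2)) : nat * nat :=
  if (i < n1)%N then (0%N, row_of l1 i) else (1%N, row_of l2 (i - n1)).
Definition tcol n1 n2 (l1 l2 : seq nat) (i : 'I_(n1 + n2)) : nat * nat :=
  if (i < n1)%N then (0%N, col_of l1 i) else (1%N, col_of l2 (i - n1)).

Definition rowstab n1 n2 l1 l2 : pred 'S_(n1 + n2) :=
  [pred p : 'S_(n1 + n2) | [forall i : 'I_(n1 + n2),
     @trow n1 n2 l1 l2 (p i) == @trow n1 n2 l1 l2 i]].
Definition colstab n1 n2 l1 l2 : pred 'S_(n1 + n2) :=
  [pred p : 'S_(n1 + n2) | [forall i : 'I_(n1 + n2),
     @tcol n1 n2 l1 l2 (p i) == @tcol n1 n2 l1 l2 i]].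

(* The action of a permutation g (relabelling of variables y_i |-> y_(g i))
   on polynomials: the monomial sigma goes to the monomial (sigma * g)
   (recall (sigma * g) x = g (sigma x) in MathComp). *)
Definition act_mpol n (g : 'S_n) (f : mpol n) : mpol n :=
  [ffun tau => f (tau * g^-1)%g].

Definition young n1 n2 (l1 l2 : seq nat) (f : mpol (n1 + n2)) : mpol (n1 + n2) :=
  [ffun tau => \sum_(r in @rowstab n1 n2 l1 l2) \sum_(c in @colstab n1 n2 l1 l2)
      (-1) ^+ odd_perm c * act_mpol r (act_mpol c f) tau].

Definition indep_mod_id n1 n2 l1 l2 d (gs : 'I_d -> mpol (n1 + n2)) : Prop :=
  forall c : 'I_d -> F,
    is_star_identity [ffun tau => \sum_(i < d) c i * young l1 l2 (gs i) tau] ->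
    forall i, c i = 0.

(* The multiplicity m_<l> of chi_(l1,l2,0,0) in the n-th *-cocharacter,
   n = n1 + n2: the multiplicity of chi_{l1} (x) chi_{l2} in the
   S_{n1} x S_{n2}-module M = P_{n1,n2,0,0} / (P_{n1,n2,0,0} cap Id^*_2),
   computed as dim_F (e_{T_{l1}} e_{T_{l2}} M), i.e. the maximal number of
   elements of e P that are linearly independent modulo the identities
   (dim P = n!, which bounds this number). *)
Definition cochar_mult (n1 n2 : nat) (l1 l2 : seq nat) : nat :=
  \max_(d < (n1 + n2)`!.+1 |
         `[< exists gs : 'I_d -> mpol (n1 + n2), indep_mod_id l1 l2 gs >])
    (d : nat).

End M12.

(* Main.v *)
Require Import Defs.
From HB Require Import structures.
From mathcomp Require Import all_boot all_order all_algebra all_fingroup.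
From mathcomp Require Import boolp zify ring.
Set Implicit Arguments.
Unset Strict Implicit.
Unset Printing Implicit Defensive.
Import GRing.Theory.
Local Open Scope ring_scope.

Section Swap.
Variable R : pzRingType.

Lemma prod_anti (x eps : R) (F : nat -> R) m len :
  (forall y, eps * y = y * eps) ->
  (forall k, (m <= k < m + len)%N -> x * F k = eps * (F k * x)) ->
  x * \prod_(m <= k < m + len) F k = eps ^+ len * (\prod_(m <= k < m + len) F k * x).
Proof.
move=> Ce; elim: len => [|len IH] H.
  by rewrite addn0 big_geq // expr0 mul1r mulr1 mul1r.
rewrite addnS big_nat_recr ?leq_addr //= mulrA IH; last first.
  by move=> k /andP[a b]; apply: H; rewrite a /= addnS ltnS ltnW.
rewrite -!mulrA H; last by rewrite leq_addr /= addnS ltnS.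
rewrite exprSr -!mulrA; congr (_ * _).
by rewrite !mulrA -Ce -!mulrA.
Qed.

Lemma split4 (G : nat -> R) n p q : (p < q < n)%N ->
  \prod_(0 <= k < n) G k = \prod_(0 <= k < p) G k * (G p *
    (\prod_(p.+1 <= k < q) G k * (G q * \prod_(q.+1 <= k < n) G k))).
Proof.
move=> /andP[pq qn].
have pn : (p < n)%N by exact: (ltn_trans pq qn).
rewrite (big_cat_nat (leq0n p) (ltnW pn)) /=.

rewrite (big_ltn pn).
rewrite (big_cat_nat pq (ltnW qn)) /=.
by rewrite (big_ltn qn).
Qed.

Lemma prod_swap_nat (U : nat -> R) (eps d : R) n p q :
  (forall y, eps * y = y * eps) -> eps * eps = 1 -> (forall y, d * y = y * d) ->
  (p < q < n)%N ->
  (forall k, (p < k < q)%N -> U p * U k = eps * (U k * U p) /\ U q * U k = eps * (U k * U q)) ->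
  U q * U p = d * (U p * U q) ->
  \prod_(0 <= k < n) U (if k == p then q else if k == q then p else k)
   = d * \prod_(0 <= k < n) U k.
Proof.
move=> Ce ee Cd pqn Hmid Hd.
have /andP[pq qn] := pqn.
rewrite !(split4 _ pqn) eqxx (gtn_eqF pq) eqxx.
set V := fun k => U (if k == p then q else if k == q then p else k).
have EA : \prod_(0 <= k < p) V k = \prod_(0 <= k < p) U k.
  apply: eq_big_nat => k /andP[_ kp]; rewrite /V (ltn_eqF kp) (ltn_eqF (ltn_trans kp pq)) //.
have EM : \prod_(p.+1 <= k < q) V k = \prod_(p.+1 <= k < q) U k.
  apply: eq_big_nat => k /andP[pk kq]; rewrite /V (gtn_eqF pk) (ltn_eqF kq) //.
have EB : \prod_(q.+1 <= k < n) V k = \prod_(q.+1 <= k < n) U k.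
  apply: eq_big_nat => k /andP[qk _]; rewrite /V (gtn_eqF qk) (gtn_eqF (ltn_trans pq qk)) //.
rewrite EA EM EB.
set A := \prod_(0 <= k < p) U k; set B := \prod_(q.+1 <= k < n) U k.
have qE : q = (p.+1 + (q - p.+1))%N by rewrite subnKC.
set r := (q - p.+1)%N in qE.
set M := \prod_(p.+1 <= k < q) U k.
have Cer : forall y, eps ^+ r * y = y * eps ^+ r.
  by move=> y; apply/esym; apply: commrX; apply/esym/Ce.
have err : eps ^+ r * eps ^+ r = 1.
  by rewrite -exprMn_comm ?ee ?expr1n //; rewrite /GRing.comm Ce.
have HP : U p * M = eps ^+ r * (M * U p).
  rewrite /M qE; apply: prod_anti => // k; rewrite -qE => /Hmid [].
  by [].
have HQ : U q * M = eps ^+ r * (M * U q).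
  rewrite /M qE; apply: prod_anti => // k; rewrite -qE => /Hmid [].
  by [].
have HP' : M * U p = eps ^+ r * (U p * M) by rewrite HP mulrA err mul1r.
have HQ' : M * U q = eps ^+ r * (U q * M) by rewrite HQ mulrA err mul1r.
rewrite !mulrA -(mulrA _ M) HP' -(mulrA _ M) HQ'.
rewrite !mulrA -(Cer (A * U q)) -(Cer (d * A * U p)).
congr (_ * _ * _); rewrite -!mulrA; congr (_ * _).
by rewrite Hd mulrA -Cd -mulrA.
Qed.
End Swap.

Section Swap2.
Variable R : pzRingType.

Lemma prod_tperm_swap n (u : 'I_n -> R) (p q : 'I_n) (eps d : R) :
  (forall y, eps * y = y * eps) -> eps * eps = 1 ->
  (forall y, d * y = y * d) -> d * d = 1 ->
  p != q ->
  (forall k : 'I_n, (minn p q < k < maxn p q)%N ->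
     u p * u k = eps * (u k * u p) /\ u q * u k = eps * (u k * u q)) ->
  u q * u p = d * (u p * u q) ->
  \prod_(k < n) u (tperm p q k) = d * \prod_(k < n) u k.
Proof.
move=> Ce ee Cd dd.
wlog pq : p q / (p < q)%N.
  move=> W; case: (ltngtP p q) => [h|h|h] npq Hm Hd.
  - apply: W => // k; rewrite (minn_idPl (ltnW h)) (maxn_idPr (ltnW h)); exact: Hm.
  - rewrite tpermC; apply: W => //; first by rewrite eq_sym.
      by move=> k; rewrite (minn_idPl (ltnW h)) (maxn_idPr (ltnW h)) => /Hm [].
    by rewrite Hd mulrA dd mul1r.
  - by rewrite (val_inj h) eqxx in npq.
move=> npq Hm Hd.
move: u p q npq pq Hm Hd; case: n => [|n] u p q npq pq Hm Hd; first by move: (ltn_ord p).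
pose U k := u (inord k).
have Uu : forall i : 'I_n.+1, U i = u i by move=> i; rewrite /U inord_val.
have -> : \prod_(k < n.+1) u (tperm p q k) =
   \prod_(0 <= k < n.+1) U (if k == val p then val q else if k == val q then val p else k).
  rewrite big_mkord; apply: eq_bigr => i _.
  case: tpermP => [->|->|/eqP a /eqP b]; rewrite ?eqxx ?Uu //.
    by rewrite (gtn_eqF pq) Uu.
  have a' : (i == p :> nat) = false by apply/negbTE; apply: contra a => /eqP h; apply/eqP/val_inj.
  have b' : (i == q :> nat) = false by apply/negbTE; apply: contra b => /eqP h; apply/eqP/val_inj.
  by rewrite a' b' Uu.
have -> : \prod_(k < n.+1) u k = \prod_(0 <= k < n.+1) U k.
  by rewrite big_mkord; apply: eq_bigr => i _; rewrite Uu.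
apply: prod_swap_nat => //.
- by rewrite pq ltn_ord.
- move=> k /andP[pk kq].
  have kn : (k < n.+1)%N by apply: ltn_trans kq (ltn_ord q).
  have := Hm (Ordinal kn); rewrite (minn_idPl (ltnW pq)) (maxn_idPr (ltnW pq)) /= pk kq.
  have -> : U k = u (Ordinal kn) by rewrite /U; congr u; apply: val_inj; rewrite /= inordK.
  by rewrite !Uu; move=> /(_ isT).
- by rewrite !Uu.
Qed.
End Swap2.

Lemma ord3P (P : 'I_3 -> Prop) : P o0 -> P o1 -> P o2 -> forall i, P i.
Proof.
move=> H0 H1 H2 [[|[|[|i]]] Hi] //.
- by rewrite (_ : Ordinal Hi = o0) //; apply: val_inj.
- by rewrite (_ : Ordinal Hi = o1) //; apply: val_inj.
- by rewrite (_ : Ordinal Hi = o2) //; apply: val_inj.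
Qed.

Section Mat.
Variable F : fieldType.
Hypothesis two : (2%:R : F) != 0.

Lemma mul3E (A B : 'M[F]_3) i j :
  (A * B) i j = A i o0 * B o0 j + A i o1 * B o1 j + A i o2 * B o2 j.
Proof.
rewrite -mulmxE mxE !big_ord_recl big_ord0 addr0 addrA.
congr (_ * _ + _ * _ + _ * _); congr (_ _ _); apply: val_inj => //.
Qed.

Lemma oppE (A : 'M[F]_3) i j : (- A) i j = - A i j.
Proof. by rewrite mxE. Qed.

Definition m3 (a b c d e f g h i : F) : 'M[F]_3 :=
  \matrix_(x < 3, y < 3) nth 0 (nth [::] [:: [:: a;b;c];[:: d;e;f];[:: g;h;i]] x) y.

Lemma symE (A : 'M[F]_3) : sym_even A ->
  A o0 o1 = 0 /\ A o0 o2 = 0 /\ A o1 o0 = 0 /\ A o2 o0 = 0 /\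
      A o1 o2 = 0 /\ A o2 o1 = 0 /\ A o2 o2 = A o1 o1.
Proof.
move=> [[a b c d] H].
have h12 := congr1 (fun M : 'M[F]_3 => M o1 o2) H.
have h21 := congr1 (fun M : 'M[F]_3 => M o2 o1) H.
have h11 := congr1 (fun M : 'M[F]_3 => M o1 o1) H.
rewrite /= mxE /= in h12; rewrite /= mxE /= in h21; rewrite /= mxE /= in h11.
have z : forall x : F, - x = x -> x = 0.
  move=> x hx; have : x *+ 2 = 0 by rewrite mulr2n -{1}hx addNr.
  by rewrite -mulr_natr => /eqP; rewrite mulf_eq0 (negbTE two) orbF => /eqP.
by do !split => //; apply: z.
Qed.

Lemma sym_comm (A B : 'M[F]_3) : sym_even A -> even3 B -> A * B = B * A.
Proof.
move=> /symE [a01 [a02 [a10 [a20 [a12 [a21 a22]]]]]] [b01 b02 b10 b20].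
apply/matrixP; apply: ord3P; apply: ord3P;
 rewrite !mul3E ?a01 ?a02 ?a10 ?a20 ?a12 ?a21 ?a22 ?b01 ?b02 ?b10 ?b20; ring.
Qed.

Lemma even3_mul (A B : 'M[F]_3) : even3 A -> even3 B -> even3 (A * B).
Proof.
move=> [a01 a02 a10 a20] [b01 b02 b10 b20].
by split; rewrite mul3E ?a01 ?a02 ?a10 ?a20 ?b01 ?b02 ?b10 ?b20; ring.
Qed.

Definition bd (A : 'M[F]_3) := A o1 o1 * A o2 o2 - A o1 o2 * A o2 o1.

Lemma bd_mul (A B : 'M[F]_3) : even3 A -> even3 B -> bd (A * B) = bd A * bd B.
Proof.
move=> [a01 a02 a10 a20] [b01 b02 b10 b20].
by rewrite /bd !mul3E ?a01 ?a02 ?a10 ?a20 ?b01 ?b02 ?b10 ?b20; ring.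
Qed.

Definition X (k : nat) : 'M[F]_3 :=
  match k with
  | 0 => m3 0 0 0 0 1 0 0 0 (-1)
  | 1 => m3 0 0 0 0 0 1 0 1 0
  | _ => m3 0 0 0 0 0 1 0 (-1) 0
  end.

Lemma X_skew k : skew_even (X k).
Proof.
split.
  by case: k => [|[|k]]; split; rewrite mxE.
apply/matrixP; apply: ord3P; apply: ord3P; rewrite !mxE;
  case: k => [|[|k]] /=; rewrite ?mxE /= ?opprK ?oppr0 //.
Qed.

Lemma X_anti i j : (i < 3)%N -> (j < 3)%N -> i != j ->
  X i * X j = - (X j * X i).
Proof.
case: i => [|[|[|//]]]; case: j => [|[|[|//]]] //= _ _ _;
apply/matrixP; apply: ord3P; apply: ord3P; rewrite oppE !mul3E !mxE /=; ring.
Qed.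

Lemma X_bd k : bd (X k) * bd (X k) = 1.
Proof. by case: k => [|[|k]]; rewrite /bd !mxE /=; ring. Qed.

Lemma sym1 : sym_even (1 : 'M[F]_3).
Proof.
split; first by split; rewrite mxE.
apply/matrixP; apply: ord3P; apply: ord3P; rewrite !mxE /= ?oppr0; rewrite ?mxE /= ?oppr0 //.
Qed.

Lemma bd1 : bd 1 = 1.
Proof. by rewrite -[1 : 'M[F]_3]/(1%:M) /bd !mxE /=; ring. Qed.

End Mat.

Lemma row_lt l x : (x < sumn l)%N -> (row_of l x < size l)%N.
Proof.
elim: l x => [|a l IH] x //=.
case: ifP => // xa h; rewrite ltnS; apply: IH; lia.
Qed.

Lemma cell_inj l x y : (x < sumn l)%N -> (y < sumn l)%N ->
  row_of l x = row_of l y -> col_of l x = col_of l y -> x = y.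
Proof.
elim: l x y => [|a l IH] x y //=.
case: ifP => xa; case: ifP => ya //= hx hy.
move=> [] hr hc; have := IH (x - a)%N (y - a)%N; lia.
Qed.

Section Eval.
Variable F : fieldType.

Lemma eval_lin n (d : nat) (c : 'I_d -> F) (h : 'I_d -> mpol F n) s :
  eval_mpol [ffun tau => \sum_(i < d) c i * h i tau] s =
  \sum_(i < d) c i *: eval_mpol (h i) s.
Proof.
rewrite /eval_mpol.
under eq_bigr do rewrite ffunE scaler_suml.
rewrite exchange_big /=; apply: eq_bigr => i _.
by rewrite scaler_sumr; apply: eq_bigr => t _; rewrite scalerA.
Qed.

Lemma eval_young n1 n2 (l1 l2 : seq nat) (g : mpol F (n1 + n2)) s :
  eval_mpol (young l1 l2 g) s =
  \sum_(r in @rowstab n1 n2 l1 l2) \sum_(c in @colstab n1 n2 l1 l2)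
     (-1) ^+ odd_perm c *: eval_mpol g (fun k => s (r (c k))).
Proof.
rewrite /eval_mpol.
under eq_bigr do rewrite ffunE scaler_suml.
rewrite exchange_big /=; apply: eq_bigr => r _.
under eq_bigr do rewrite scaler_suml.
rewrite exchange_big /=; apply: eq_bigr => c _.
rewrite scaler_sumr.
rewrite (reindex_inj (mulIg (c * r)%g)) /=.
apply: eq_bigr => t _.
rewrite !ffunE scalerA; congr (_ *: _).
  congr (_ * g _).
  by rewrite !mulgA mulgK mulgK.
by apply: eq_bigr => k _; rewrite !permM.
Qed.

Lemma tperm_conj n (rho : {perm 'I_n}) (a b k : 'I_n) :
  tperm a b (rho k) = rho (tperm ((rho^-1)%g a) ((rho^-1)%g b) k).
Proof.
case: (tpermP ((rho^-1)%g a) ((rho^-1)%g b) k) => [e|e|ha hb].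
- by rewrite e !permKV tpermL.
- by rewrite e !permKV tpermR.
rewrite tpermD //.
  by apply/eqP => h; apply: ha; rewrite h permK.
by apply/eqP => h; apply: hb; rewrite h permK.
Qed.

Hypothesis two : (2%:R : F) != 0.

Lemma eval_tperm_sym n (g : mpol F n) (w : 'I_n -> 'M[F]_3) (a b : 'I_n) :
  a != b -> sym_even (w a) -> sym_even (w b) -> (forall i, even3 (w i)) ->
  eval_mpol g (fun k => w (tperm a b k)) = eval_mpol g w.
Proof.
move=> ab sa sb ev; rewrite /eval_mpol; apply: eq_bigr => rho _; congr (_ *: _).
under eq_bigr do rewrite tperm_conj.
rewrite -[RHS]mul1r.
apply: (prod_tperm_swap (u := fun k => w (rho k)) (eps := 1)).
- by move=> y; rewrite mul1r mulr1.
- by rewrite mulr1.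
- by move=> y; rewrite mul1r mulr1.
- by rewrite mulr1.
- by apply: contra ab => /eqP/(congr1 rho); rewrite !permKV => ->.
- by move=> k _; rewrite !permKV !mul1r; split; apply: sym_comm.
- by rewrite !permKV mul1r; apply: sym_comm => //; case: sa.
Qed.

End Eval.

Section Common.
Variables (n1 n2 : nat) (l1 l2 : seq nat).
Local Notation n := (n1 + n2).

Lemma tcol_lt (i j : 'I_n) : tcol l1 l2 i = tcol l1 l2 j -> (i < n1)%N = (j < n1)%N.
Proof. by rewrite /tcol; case: ifP; case: ifP. Qed.

Lemma trow_lt (i j : 'I_n) : trow l1 l2 i = trow l1 l2 j -> (i < n1)%N = (j < n1)%N.
Proof. by rewrite /trow; case: ifP; case: ifP. Qed.

Lemma colstabP (c : 'S_n) : reflect (forall i, tcol l1 l2 (c i) = tcol l1 l2 i)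
   (c \in @colstab n1 n2 l1 l2).
Proof. by apply: (iffP forallP) => h i; apply/eqP/h. Qed.

Lemma rowstabP (c : 'S_n) : reflect (forall i, trow l1 l2 (c i) = trow l1 l2 i)
   (c \in @rowstab n1 n2 l1 l2).
Proof. by apply: (iffP forallP) => h i; apply/eqP/h. Qed.

Lemma colstabM (c d : 'S_n) : c \in @colstab n1 n2 l1 l2 -> d \in @colstab n1 n2 l1 l2 ->
  (c * d)%g \in @colstab n1 n2 l1 l2.
Proof. by move=> /colstabP hc /colstabP hd; apply/colstabP => i; rewrite permM hd hc. Qed.

End Common.

Lemma eval_ext (F : fieldType) n (g : mpol F n) (w w' : 'I_n -> 'M[F]_3) :
  (forall k, w k = w' k) -> eval_mpol g w = eval_mpol g w'.
Proof.
move=> h; rewrite /eval_mpol; apply: eq_bigr => t _; congr (_ *: _).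
by apply: eq_bigr => k _; rewrite h.
Qed.

Section Forward.
Variables (F : fieldType) (n1 n2 a0 a1 : nat) (l2 : seq nat).
Hypothesis two : (2%:R : F) != 0.
Hypotheses (a0p : (0 < a0)%N) (a1p : (0 < a1)%N) (n1E : n1 = (a0 + a1)%N).
Local Notation n := (n1 + n2).
Local Notation l1 := [:: a0; a1].

Lemma young_id (g : mpol F n) : is_star_identity (young l1 l2 g).
Proof.
move=> s adm; rewrite eval_young; apply: big1 => r /rowstabP rR.
have h0 : (0 < n)%N by lia.
have ha : (a0 < n)%N by lia.
pose i0 := Ordinal h0; pose ia := Ordinal ha.
have i0a : i0 != ia by rewrite -val_eqE /= eq_sym -lt0n.
pose T := tperm i0 ia.
have TC : T \in @colstab n1 n2 l1 l2.
  apply/colstabP => i; rewrite /T.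
  have E : tcol l1 l2 i0 = tcol l1 l2 ia.
    have h1 : (a0 < n1)%N by lia.
    have h2 : (0 < n1)%N by lia.
    by rewrite /tcol /= h1 h2 a0p ltnn subnn a1p.
  by case: tpermP => [->|->|].
set S := (X in X = 0).
have adm' : forall c, c \in @colstab n1 n2 l1 l2 -> admissible (fun k => s (r (c k))).
  move=> c /colstabP cC i.
  have e : (r (c i) < n1)%N = (i < n1)%N by rewrite (trow_lt (rR _)) (tcol_lt (cC _)).
  have [h1 h2] := adm (r (c i)); split => h; [apply: h1; by rewrite e | apply: h2; by rewrite leqNgt e -leqNgt].
have ev : forall c, c \in @colstab n1 n2 l1 l2 -> forall i, even3 (s (r (c i))).
  move=> c cC i; have [h1 h2] := adm' c cC i.
  by case: (ltnP i n1) => h; [case: (h1 h) | case: (h2 h)].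
have SN : S = - S.
  rewrite {1}/S (reindex_inj (mulgI T)) /= -sumrN.
  have eqp : forall c, ((T * c)%g \in @colstab n1 n2 l1 l2) = (c \in @colstab n1 n2 l1 l2).
    move=> c; apply/idP/idP => h; last exact: colstabM.
    by rewrite -(mul1g c) -(tperm2 i0 ia) -mulgA; apply: colstabM.
  rewrite (eq_bigl _ _ eqp); apply: eq_bigr => c cC.
  rewrite odd_mul_tperm i0a signr_addb expr1 mulN1r scaleNr; congr (- (_ *: _)).
  rewrite (@eval_ext _ _ _ _ (fun k => (fun k => s (r (c k))) (T k))); last first.
    by move=> k; rewrite permM.
  apply: eval_tperm_sym => //.
  - by have [h _] := adm' c cC i0; apply: h; rewrite /=; lia.
  - by have [h _] := adm' c cC ia; apply: h; rewrite /=; lia.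
  - exact: ev.
have : S *+ 2 = 0 by rewrite mulr2n {1}SN addNr.
by rewrite -scaler_nat => /eqP; rewrite scaler_eq0 (negbTE two) => /eqP.
Qed.

End Forward.

Section Backward.
Variables (F : fieldType) (n1 n2 : nat) (l1 l2 : seq nat).
Hypothesis two : (2%:R : F) != 0.
Hypothesis hl1 : forall i, (i < n1)%N -> col_of l1 i = i.
Hypothesis hs : sumn l2 = n2.
Hypothesis hsz : (size l2 <= 3)%N.
Local Notation n := (n1 + n2).
Local Notation C := (@colstab n1 n2 l1 l2).
Local Notation R := (@rowstab n1 n2 l1 l2).

Definition rowm (i : 'I_n) := row_of l2 (i - n1).
Definition colm (i : 'I_n) := col_of l2 (i - n1).

Lemma rowm_lt (i : 'I_n) : (n1 <= i)%N -> (rowm i < 3)%N.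
Proof.
move=> h; apply: leq_trans hsz; apply: row_lt; rewrite hs.
by have := ltn_ord i; lia.
Qed.

Lemma cellm_inj (i j : 'I_n) : (n1 <= i)%N -> (n1 <= j)%N -> rowm i = rowm j -> colm i = colm j -> i = j.
Proof.
move=> hi hj hr hc; apply: ord_inj.
have := ltn_ord i; have := ltn_ord j => hj' hi'.
have e := @cell_inj l2 (i - n1) (j - n1).
have e' : (i - n1 = j - n1)%N by apply: e => //; rewrite hs; lia.
lia.
Qed.

Definition key (i : 'I_n) : nat := if (i < n1)%N then nat_of_ord i else (n1 + 3 * colm i + rowm i)%N.

Lemma key_inj : injective key.
Proof.
move=> i j; rewrite /key; case: ifP => hi; case: ifP => hj.
- by move=> h; apply: ord_inj.
- by move=> h; lia.
- by move=> h; lia.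
have hi' : (n1 <= i)%N by rewrite leqNgt hi.
have hj' : (n1 <= j)%N by rewrite leqNgt hj.
have ri := rowm_lt hi'; have rj := rowm_lt hj'.
move=> h; apply: cellm_inj => //; lia.
Qed.

Definition rank (i : 'I_n) := #|[pred j : 'I_n | (key j < key i)%N]|.

Lemma rank_lt i : (rank i < n)%N.
Proof.
have : (rank i <= #|predC1 i|)%N.
  apply: subset_leq_card; apply/subsetP => j /=; rewrite !inE => h.
  by apply/eqP => e; rewrite e ltnn in h.
rewrite cardC1 card_ord => h; have := ltn_ord i; lia.
Qed.

Lemma rank_mono i j : (key i < key j)%N -> (rank i < rank j)%N.
Proof.
move=> h; apply: proper_card; apply/properP; split.
  by apply/subsetP => k; rewrite !inE => hk; apply: ltn_trans hk h.
by exists i; rewrite !inE ?ltnn.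
Qed.

Lemma rank_inj : injective (fun i => Ordinal (rank_lt i)).
Proof.
move=> i j [] e; apply: key_inj.
case: (ltngtP (key i) (key j)) => // h.
  by have := rank_mono h; rewrite e ltnn.
by have := rank_mono h; rewrite e ltnn.
Qed.

Definition rho : 'S_n := perm rank_inj.
Definition sigma : 'S_n := (rho^-1)%g.
Lemma rhoE y : rho y = Ordinal (rank_lt y).
Proof. by rewrite /rho permE. Qed.

Lemma key_sigma (p k : 'I_n) : (p < k)%N -> (key (sigma p) < key (sigma k))%N.
Proof.
move=> pk; case: (ltngtP (key (sigma p)) (key (sigma k))) => // h.
  have := rank_mono h.
  have e : forall x, rank (sigma x) = x.
    by move=> x; rewrite -{2}(permKV rho x) rhoE.
  by rewrite !e; lia.
have := key_inj h => /(congr1 rho); rewrite !permKV => /(congr1 val) /= e.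
by rewrite e ltnn in pk.
Qed.

Definition sub (i : 'I_n) : 'M[F]_3 := if (i < n1)%N then 1 else X F (rowm i).

Lemma sub_adm : admissible sub.
Proof.
move=> i; rewrite /sub; split => h.
  by rewrite h; apply: sym1.
by rewrite ifF; [apply: X_skew | apply/negbTE; rewrite -leqNgt].
Qed.

Lemma tcolm (i : 'I_n) : (n1 <= i)%N -> tcol l1 l2 i = (1%N, colm i).
Proof. by move=> h; rewrite /tcol ifF //; apply/negbTE; rewrite -leqNgt. Qed.

Lemma C_fix c (i : 'I_n) : c \in C -> (i < n1)%N -> c i = i.
Proof.
move=> /colstabP cC h; have := cC i; have := tcol_lt (cC i); rewrite h => e.
rewrite /tcol e h => [[]]; rewrite hl1 ?e // hl1 // => e'; exact: val_inj.
Qed.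

Lemma C_ge c (i : 'I_n) : c \in C -> (n1 <= i)%N -> (n1 <= c i)%N /\ colm (c i) = colm i.
Proof.
move=> /colstabP cC h.
have h' : (n1 <= c i)%N by rewrite leqNgt (tcol_lt (cC i)) -leqNgt.
by split => //; have := cC i; rewrite !tcolm // => [[]].
Qed.

Lemma R_sub r (i : 'I_n) : r \in R -> sub (r i) = sub i.
Proof.
move=> /rowstabP rR; rewrite /sub (trow_lt (rR i)); case: ifP => // h.
have := rR i; rewrite /trow h ifF; last by rewrite (trow_lt (rR i)) h.
by move=> [] e; rewrite /rowm e.
Qed.

Definition P (c : 'S_n) := \prod_(k < n) sub (c (sigma k)).

Lemma P_swap c (a b : 'I_n) : c \in C -> a != b -> (n1 <= a)%N -> (n1 <= b)%N -> colm a = colm b ->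
  P (c * tperm a b)%g = - P c.
Proof.
move=> cC ab ha hb cab.
pose tau := (sigma * c)%g.
have tauE : forall k, tau k = c (sigma k) by move=> k; rewrite permM.
rewrite /P.
under eq_bigr do rewrite permM -tauE tperm_conj.
have -> : \prod_(k < n) sub (c (sigma k)) = \prod_(k < n) sub (tau k).
  by apply: eq_bigr => k _; rewrite tauE.
rewrite -mulN1r.
set p := (tau^-1)%g a; set q := (tau^-1)%g b.
have rab : rowm a != rowm b by apply: contra ab => /eqP e; apply/eqP; apply: cellm_inj.
have sa : sub a = X F (rowm a) by rewrite /sub ifF //; apply/negbTE; rewrite -leqNgt.
have sb : sub b = X F (rowm b) by rewrite /sub ifF //; apply/negbTE; rewrite -leqNgt.
apply: (prod_tperm_swap (u := fun k => sub (tau k)) (eps := -1) (d := -1)).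
- by move=> y; rewrite mulN1r mulrN1.
- by rewrite mulN1r opprK.
- by move=> y; rewrite mulN1r mulrN1.
- by rewrite mulN1r opprK.
- by apply: contra ab => /eqP/(congr1 tau); rewrite !permKV => ->.
- move=> k hk.
  rewrite /p /q !permKV sa sb.
  have Hp : (n1 <= sigma p)%N /\ colm (sigma p) = colm a.
    have e : c (sigma p) = a by rewrite -tauE /p permKV.
    have hsp : (n1 <= sigma p)%N.
      have /colstabP cC' := cC; rewrite leqNgt -(tcol_lt (cC' (sigma p))) e -leqNgt //.
    by split => //; have [_ <-] := C_ge cC hsp; rewrite e.
  have Hq : (n1 <= sigma q)%N /\ colm (sigma q) = colm a.
    have e : c (sigma q) = b by rewrite -tauE /q permKV.
    have hsq : (n1 <= sigma q)%N.
      have /colstabP cC' := cC; rewrite leqNgt -(tcol_lt (cC' (sigma q))) e -leqNgt //.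
    by split => //; have [_ <-] := C_ge cC hsq; rewrite e.
  have Hk : (n1 <= sigma k)%N /\ colm (sigma k) = colm a.
    have rp := rowm_lt Hp.1; have rq := rowm_lt Hq.1.
    have kp : k != p by apply/negP => /eqP e; rewrite e in hk; lia.
    have kq : k != q by apply/negP => /eqP e; rewrite e in hk; lia.
    have [K1 K2] : ((minn (key (sigma p)) (key (sigma q)) < key (sigma k)) /\
                   (key (sigma k) < maxn (key (sigma p)) (key (sigma q))))%N.
      have pqne : p != q by apply: contra ab => /eqP/(congr1 tau); rewrite /p /q !permKV => ->.
      case: (ltngtP p q) hk => [pq|qp|/ord_inj e]; last by rewrite e eqxx in pqne.
        move=> /andP[h1 h2].
        have := key_sigma h1; have := key_sigma h2; have := key_sigma pq; lia.
      move=> /andP[h1 h2].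
      have := key_sigma h1; have := key_sigma h2; have := key_sigma qp; lia.
    move: K1 K2; rewrite /key.
    rewrite ifF; last by apply/negbTE; rewrite -leqNgt; exact: Hp.1.
    rewrite ifF; last by apply/negbTE; rewrite -leqNgt; exact: Hq.1.
    rewrite Hp.2 Hq.2.
    case: ifP => hk1 K1 K2; first by lia.
    have hk1' : (n1 <= sigma k)%N by rewrite leqNgt hk1.
    have := rowm_lt hk1'.
    by split => //; lia.
  have [Hk1 Hk2] := C_ge cC Hk.1.
  rewrite -tauE in Hk1 Hk2; rewrite Hk.2 in Hk2.
  have sk : sub (tau k) = X F (rowm (tau k)) by rewrite /sub ifF //; apply/negbTE; rewrite -leqNgt.
  have nk : forall z, z != tau k -> (n1 <= z)%N -> colm z = colm a -> rowm z != rowm (tau k).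
    move=> z zk hz cz; apply: contra zk => /eqP e; apply/eqP; apply: cellm_inj => //.
    by rewrite cz Hk2.
  have ak : a != tau k.
    apply/negP => /eqP e; move: hk; rewrite /p /q e permK; lia.
  have bk : b != tau k.
    apply/negP => /eqP e; move: hk; rewrite /p /q e permK; lia.
  rewrite sk !mulN1r; split; apply: X_anti => //; try apply: rowm_lt => //.
  + exact: nk.
  + by apply: nk.
- rewrite /p /q !permKV sa sb mulN1r; apply: X_anti; try apply: rowm_lt => //.
  by rewrite eq_sym.
Qed.

Lemma tperm_C (x : 'I_n) c : c \in C -> tperm x (c x) \in C.
Proof.
move=> /colstabP cC; apply/colstabP => i; case: tpermP => [->|->|] //.
Qed.

Lemma one_C : (1%g : 'S_n) \in C.
Proof. by apply/colstabP => i; rewrite perm1. Qed.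

Lemma one_R : (1%g : 'S_n) \in R.
Proof. by apply/rowstabP => i; rewrite perm1. Qed.

Lemma core m (c : 'S_n) : (#|[pred y | c y != y]| <= m)%N -> c \in C ->
  (-1) ^+ odd_perm c *: P c = P 1%g.
Proof.
have none : forall c : 'S_n, (forall y, [pred y | c y != y] y = false) ->
    (-1) ^+ odd_perm c *: P c = P 1%g.
  move=> c0 h; have -> : c0 = 1%g.
    by apply/permP => y; rewrite perm1; apply/eqP; have := h y; rewrite /= => /negbFE.
  by rewrite odd_perm1 expr0 scale1r.
elim: m c => [|m IH] c hm cC; case: (pickP [pred y | c y != y]) => [x hx | h];
  try exact: none.
  have : (0 < #|[pred y | c y != y]|)%N by apply/card_gt0P; exists x.
  by move: hm; lia.
rewrite /= in hx.
have xn : (n1 <= x)%N.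
  by rewrite leqNgt; apply/negP => h; move: hx; rewrite /= C_fix // eqxx.
have [bn cb] := C_ge cC xn.
pose c' := (c * tperm x (c x))%g.
have c'C : c' \in C by apply: colstabM => //; apply: tperm_C.
have hm' : (#|[pred y | c' y != y]| <= m)%N.
  suff : (#|[pred y | c' y != y]| < #|[pred y | c y != y]|)%N by move: hm; lia.
  apply: proper_card; apply/properP; split.
    apply/subsetP => y; rewrite !inE /c' permM; apply: contra => /eqP cy.
    have yx : y != x by apply: contra hx => /eqP <-; rewrite cy.
    have ycx : y != c x.
      apply: contra yx => /eqP e; apply/eqP; apply: (@perm_inj _ c); rewrite -e cy.
      done.
    by rewrite cy tpermD // eq_sym.
  by exists x; rewrite !inE // /c' permM tpermR eqxx.
have Ec : c = (c' * tperm x (c x))%g by rewrite /c' -mulgA tperm2 mulg1.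
rewrite Ec P_swap //; last by rewrite eq_sym.
rewrite odd_permM odd_tperm eq_sym hx signr_addb expr1 mulrN1 scaleNr scalerN opprK.
exact: IH c' hm' c'C.
Qed.

Lemma P1_neq0 : P 1%g != 0.
Proof.
have : even3 (P 1%g) /\ bd (P 1%g) * bd (P 1%g) = 1.
  rewrite /P; apply: (big_ind (fun M : 'M[F]_3 => even3 M /\ bd M * bd M = 1)).
  - by split; [case: (sym1 F) | rewrite bd1 mulr1].
  - move=> A B [eA bA] [eB bB]; split; first exact: even3_mul.
    rewrite bd_mul //; transitivity (bd A * bd A * (bd B * bd B)); first by ring.
    by rewrite bA bB mulr1.
  - move=> i _; rewrite /sub; case: ifP => _.
      by split; [case: (sym1 F) | rewrite bd1 mulr1].
    by split; [exact: (X_skew _ _).1 | exact: X_bd].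
move=> [_ hb]; apply/eqP => e; move: hb; rewrite e /bd !mxE !mul0r subrr => /eqP.
by rewrite mul0r eq_sym oner_eq0.
Qed.

Definition delta : mpol F n := [ffun t => (t == sigma)%:R].

Lemma eval_delta w : eval_mpol delta w = \prod_(k < n) w (sigma k).
Proof.
rewrite /eval_mpol (bigD1 sigma) //= ffunE eqxx scale1r [X in _ + X]big1 ?addr0 // => t tn.
by rewrite ffunE (negbTE tn) scale0r.
Qed.

Lemma eval_young_delta : eval_mpol (young l1 l2 delta) sub = P 1%g *+ #|C| *+ #|R|.
Proof.
rewrite eval_young -sumr_const; apply: eq_bigr => r rR.
rewrite -sumr_const; apply: eq_bigr => c cC.
rewrite eval_delta -(core (leqnn _) cC); congr (_ *: _).
by apply: eq_bigr => k _; rewrite R_sub.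
Qed.

Hypothesis char0 : forall m, ((m%:R : F) == 0) = (m == 0%N).

Lemma back_indep : indep_mod_id l1 l2 (fun _ : 'I_1 => delta).
Proof.
move=> c0 hid i; have := hid sub sub_adm.
rewrite eval_lin big_ord1 eval_young_delta -mulrnA -scaler_nat scalerA => /eqP.
rewrite scaler_eq0 (negbTE P1_neq0) orbF mulf_eq0 char0 muln_eq0.
case/or3P => [/eqP h|h|h].
- by rewrite (ord1 i).
- have : (0 < #|C|)%N by apply/card_gt0P; exists 1%g; exact: one_C.
  by rewrite lt0n h.
- have : (0 < #|R|)%N by apply/card_gt0P; exists 1%g; exact: one_R.
  by rewrite lt0n h.
Qed.

End Backward.

Unset Implicit Arguments.
Set Strict Implicit.

Theorem proposition5p2 (F : fieldType) (charF0 : [pchar F] =i pred0)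
  (n1 n2 : nat) (l1 l2 : seq nat) :
  is_partition n1 l1 -> is_partition n2 l2 ->
  (size l1 <= 2)%N -> (size l2 <= 3)%N ->
  (cochar_mult F n1 n2 l1 l2 != 0)%N <-> (size l1 <= 1)%N.
Proof.
move=> p1 p2 s1 s2.
have char0 : forall m, ((m%:R : F) == 0) = (m == 0%N) by apply/pcharf0P.
have two : (2%:R : F) != 0 by rewrite char0.
case/and3P: p1 => _ pos1 /eqP sum1; case/and3P: p2 => _ _ /eqP sum2.
split.
- apply: contraLR; rewrite -ltnNge negbK => big.
  case: l1 s1 big pos1 sum1 => [|a0 [|a1 [|? ?]]] //= _ _ /and3P[a0p a1p _] sum1.
  rewrite /cochar_mult -leqn0; apply/bigmax_leqP => d /asboolP [gs ind].
  case: (posnP d) => [->//|d0].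
  suff : (1 : F) = 0 by move/eqP; rewrite oner_eq0.
  apply: (ind (fun _ => 1) _ (Ordinal d0)).
  move=> s adm; rewrite eval_lin; apply: big1 => j _.
  have n1E : n1 = (a0 + a1)%N by rewrite -sum1 addn0.
  by rewrite (young_id l2 two a0p a1p n1E (gs j) adm) scaler0.
- move=> sz.
  have hl1 : forall i, (i < n1)%N -> col_of l1 i = i.
    clear s1; move: sum1 sz pos1; case: l1 => [|a [|? ?]] //= sum1 _ _ i.
    by rewrite -sum1 addn0 => ->.
  rewrite -lt0n /cochar_mult.
  have h1 : (1 < (n1 + n2)`!.+1)%N by rewrite ltnS fact_gt0.
  apply: (@leq_trans 1 _ _ _ (leq_bigmax_cond (Ordinal h1) _)) => //.
  apply/asboolP; eexists; exact: (back_indep (two := two) (hs := sum2) (hsz := s2) hl1 char0).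
Qed.
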